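(* For every integer $n\ge2$ and every integer $s\ge0$ with $2^s\le n$, the polynomial $1+x^{2^s}$ does not divide $\operatorname{num}_{\mathcal B}(n,x)$ in $\mathbb{Z}[x]$. Consequently, for every $n\ge1$, $\gcd(\operatorname{num}_{\mathcal B}(n,x),\operatorname{den}_{\mathcal B}(n,x))=1$.
   Context: A binary partition of $n$ is a partition of $n$ (finite nonincreasing sequence of positive integers summing to $n$) all of whose parts are powers of $2$ (including $1$); $\mathcal B(n)$ denotes the set of binary partitions of $n$, and $m_\lambda(i)$ the number of parts of $\lambda$ equal to $i$. For $\lambda\in\mathcal B(n)$ let $h_{\mathcal B,\lambda}(x)=\prod_{k\ge0}(1+x^{2^k})^{\lfloor n/2^k\rfloor-m_\lambda(2^k)}$. Let $G_{\mathcal B}(n,x)=\gcd\{h_{\mathcal B,\lambda}(x):\lambda\in\mathcal B(n)\}$ in $\mathbb{Z}[x]$ (normalized with positive leading coefficient), and $$\operatorname{num}_{\mathcal B}(n,x)=\frac{1}{G_{\mathcal B}(n,x)}\sum_{\lambda\in\mathcal B(n)}h_{\mathcal B,\lambda}(x),\qquad \operatorname{den}_{\mathcal B}(n,x)=\frac{\prod_{k\ge0}(1+x^{2^k})^{\lfloor n/2^k\rfloor}}{G_{\mathcal B}(n,x)}.$$ *)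

(* Defs.v *)
From HB Require Import structures.
From mathcomp Require Import all_boot all_order all_algebra.
Set Implicit Arguments. Unset Strict Implicit. Unset Printing Implicit Defensive.
Import GRing.Theory Num.Theory.
Local Open Scope ring_scope.

Definition is_pow2 (i : nat) : bool := [exists k : 'I_i.+1, i == (2 ^ k)%N].

(* A partition of n is encoded as an n-tuple of entries in {0..n}, nonincreasing,
   padded with zeros (a partition of n has at most n parts, each <= n).
   The parts are the nonzero entries. *)
Definition parts (n : nat) (t : n.-tuple 'I_n.+1) : seq nat := map val t.

Definition is_bin_part (n : nat) (t : n.-tuple 'I_n.+1) : bool :=
  [&& sorted geq (parts t),
      all (fun i => (i == 0%N) || is_pow2 i) (parts t)
    & sumn (parts t) == n].

Definition mult (n : nat) (t : n.-tuple 'I_n.+1) (i : nat) : nat :=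
  count_mem i (parts t).

(* h_{B,lambda}(x) = prod_{k>=0} (1 + x^{2^k})^(floor(n/2^k) - m_lambda(2^k));
   factors with k > n are trivial (exponent 0). *)
Definition hB (n : nat) (t : n.-tuple 'I_n.+1) : {poly int} :=
  \prod_(k < n.+1) (1 + 'X^(2 ^ k)) ^+ (n %/ 2 ^ k - mult t (2 ^ k))%N.

Definition fullB (n : nat) : {poly int} :=
  \prod_(k < n.+1) (1 + 'X^(2 ^ k)) ^+ (n %/ 2 ^ k)%N.

Definition sumB (n : nat) : {poly int} :=
  \sum_(t : n.-tuple 'I_n.+1 | is_bin_part t) hB t.

Definition dvdZ (p q : {poly int}) : Prop := exists r : {poly int}, q = r * p.

Definition is_GB (n : nat) (G : {poly int}) : Prop :=
  [/\ 0 < lead_coef G,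
      (forall t : n.-tuple 'I_n.+1, is_bin_part t -> dvdZ G (hB t))
    & (forall d : {poly int},
         (forall t : n.-tuple 'I_n.+1, is_bin_part t -> dvdZ d (hB t)) -> dvdZ d G)].

(* Main.v *)
Require Import Defs.
From mathcomp Require Import all_boot all_order all_algebra all_field.
From mathcomp Require Import zify ring lra.
Import GRing.Theory Num.Theory.
Set Implicit Arguments. Unset Strict Implicit.

Section Comb.
Local Open Scope nat_scope.

Lemma is_pow2P x : reflect (exists j, x = 2 ^ j) (is_pow2 x).
Proof.
apply: (iffP existsP) => [[k /eqP ->]|[j ->]]; first by exists k.
have hj : j < (2 ^ j).+1 by rewrite ltnS; exact: ltnW (ltn_expl j (isT : 1 < 2)).
by exists (Ordinal hj).
Qed.

Lemma pow_sum (n x : nat) : x < n.+1 -> (x == 0) || is_pow2 x ->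
  \sum_(k < n.+1) 2 ^ k * (x == 2 ^ k) = x.
Proof.
move=> xn /orP [/eqP x0|/is_pow2P [j xj]].
  by rewrite x0; apply: big1 => k _; rewrite eq_sym expn_eq0 /= muln0.
have hj : j < n.+1 by apply: leq_ltn_trans _ xn; rewrite xj; exact: ltnW (ltn_expl j (isT : 1 < 2)).
rewrite xj.
rewrite (bigD1 (Ordinal hj)) //= eqxx muln1 big1 ?addn0 // => k /eqP hk.
rewrite eqn_exp2l //; case: eqP => [e|]; last by rewrite muln0.
by case: hk; apply: val_inj.
Qed.

Lemma mult_sum n (l : seq nat) :
  all (fun x => (x < n.+1) && ((x == 0) || is_pow2 x)) l ->
  \sum_(k < n.+1) 2 ^ k * count_mem (2 ^ k) l = sumn l.
Proof.
elim: l => [|x l IH] /=; first by move=> _; apply: big1 => k _; rewrite muln0.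
case/andP => /andP [xn px] /IH <-.
under eq_bigr do rewrite mulnDr.
by rewrite big_split /= (pow_sum xn px).
Qed.

Lemma bin_sum n (t : n.-tuple 'I_n.+1) : is_bin_part t ->
  \sum_(k < n.+1) 2 ^ k * mult t (2 ^ k) = n.
Proof.
case/and3P => _ hall /eqP hs; rewrite /mult mult_sum ?hs //.
apply/allP => x xin; rewrite (allP hall) // andbT.
by move: xin; rewrite /parts; case/mapP => y _ ->; exact: ltn_ord.
Qed.

Lemma mult_le n (t : n.-tuple 'I_n.+1) (k : 'I_n.+1) : is_bin_part t ->
  2 ^ k * mult t (2 ^ k) <= n.
Proof.
move=> /bin_sum hs; apply: leq_trans (_ : _ <= \sum_(k < n.+1) 2 ^ k * mult t (2 ^ k)) _; last by rewrite hs.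
rewrite (bigD1 k) //=; exact: leq_addr.
Qed.

End Comb.


Section Count.
Local Open Scope nat_scope.

Definition ex n (t : n.-tuple 'I_n.+1) k := n %/ 2 ^ k - mult t (2 ^ k).

Lemma count_exp n (t : n.-tuple 'I_n.+1) (s : 'I_n.+1) :
  is_bin_part t -> ex t s = 0 ->
  \sum_(k < n.+1 | k <= s) 2 ^ k * ex t k + n =
  \sum_(k < n.+1 | k <= s) 2 ^ k * (n %/ 2 ^ k).
Proof.
move=> bt es.
have hk (k : 'I_n.+1) : 2 ^ k * ex t k + 2 ^ k * mult t (2 ^ k) = 2 ^ k * (n %/ 2 ^ k).
  rewrite -mulnDr /ex subnK //.
  by rewrite leq_divRL ?expn_gt0 // mulnC mult_le.
have hsum := bin_sum bt.
rewrite (bigID (fun k : 'I_n.+1 => k <= s)) /= in hsum.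
set Y := \sum_(k < n.+1 | k <= s) _ in hsum.
set Z := \sum_(k < n.+1 | ~~ (k <= s)) _ in hsum.
have dZ : 2 ^ s.+1 %| Z.
  apply: dvdn_sum => k; rewrite -ltnNge => sk.
  by apply: dvdn_mulr; rewrite dvdn_exp2l.
have hY : 2 ^ s * mult t (2 ^ s) <= Y.
  by rewrite /Y (bigD1 s) //=; exact: leq_addr.
have hm : n %/ 2 ^ s <= mult t (2 ^ s) by move/eqP: es; rewrite /ex subn_eq0.
have hq : 2 ^ s * (n %/ 2 ^ s) <= 2 ^ s * mult t (2 ^ s) by rewrite leq_mul2l hm orbT.
have hn : n = n %/ 2 ^ s * 2 ^ s + n %% 2 ^ s := divn_eq n (2 ^ s).
have hr : n %% 2 ^ s < 2 ^ s by rewrite ltn_pmod ?expn_gt0.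
have Z0 : Z = 0.
  case: (posnP Z) => // Zp.
  have := dvdn_leq Zp dZ; rewrite expnS; lia.
have -> : \sum_(k < n.+1 | k <= s) 2 ^ k * (n %/ 2 ^ k) =
   \sum_(k < n.+1 | k <= s) 2 ^ k * ex t k + Y.
  by rewrite /Y -big_split /=; apply: eq_bigr => k _; rewrite hk.
lia.
Qed.

End Count.


Section Witness.
Local Open Scope nat_scope.

Lemma sorted_nseq_cat a x (l : seq nat) : sorted geq l -> all (fun y => y <= x) l ->
  sorted geq (nseq a x ++ l).
Proof.
have tr : transitive geq by move=> y x' z h1 h2; exact: leq_trans h2 h1.
move=> sl al; elim: a => [|a IH] //=.
rewrite (path_sortedE tr) IH andbT all_cat all_nseq /= leqnn orbT /=.
exact: al.
Qed.

Variables (n s : nat).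
Hypothesis hsn : 2 ^ s <= n.

Let P := 2 ^ s.
Let q := n %/ P.
Let r := n %% P.
Definition l0 := nseq q P ++ nseq r 1 ++ nseq (n - q - r) 0.

Lemma size_l0 : size (map (@inord n) l0) == n.
Proof.
rewrite size_map /l0 !size_cat !size_nseq.
have hn : n = q * P + r := divn_eq n P.
have hP : 0 < P by rewrite expn_gt0.
have : q <= q * P by rewrite leq_pmulr.
move=> h; apply/eqP; lia.
Qed.

Definition t0 : n.-tuple 'I_n.+1 := Tuple size_l0.

Lemma l0_le x : x \in l0 -> x <= n.
Proof.
rewrite /l0 !mem_cat => /or3P [] /nseqP [-> _] //; apply: leq_trans _ hsn => //.
by rewrite expn_gt0.
Qed.

Lemma parts_t0 : parts t0 = l0.
Proof.
rewrite /parts /t0 /= -map_comp -[RHS]map_id; apply/eq_in_map => x /l0_le xn /=.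
by rewrite inordK.
Qed.

Lemma bin_t0 : is_bin_part t0.
Proof.
rewrite /is_bin_part parts_t0; apply/and3P; split.
- apply: sorted_nseq_cat.
    apply: sorted_nseq_cat; first by rewrite -[nseq _ 0]cats0; apply: sorted_nseq_cat.
    by apply/allP => y /nseqP [-> _].
  rewrite all_cat; apply/andP; split; apply/allP => y /nseqP [-> _] //.
  by rewrite expn_gt0.
- rewrite !all_cat; apply/and3P; split; apply/allP => y /nseqP [-> _] //.
    by apply/orP; right; apply/is_pow2P; exists s.
  by apply/orP; right; apply/is_pow2P; exists 0.
- rewrite !sumn_cat !sumn_nseq /=; apply/eqP.
  have hn : n = q * P + r := divn_eq n P.
  lia.
Qed.

Lemma ex_t0 : ex t0 s = 0.
Proof.
rewrite /ex /mult parts_t0 /l0 !count_cat !count_nseq /= eqxx.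
apply/eqP; rewrite subn_eq0 mul1n; exact: leq_addr.
Qed.

End Witness.

Local Open Scope ring_scope.

Fixpoint dd (j : nat) : algC := if j is j'.+1 then sqrtC (2 + dd j') else 0.

Lemma dd_ge0 j : 0 <= dd j.
Proof. by elim: j => [|j IH] //=; rewrite sqrtC_ge0 addr_ge0. Qed.

Lemma dd_gt0 j : 0 < dd j.+1.
Proof. by rewrite /= sqrtC_gt0 ltr_pwDl ?dd_ge0. Qed.

Lemma dd_sq j : dd j.+1 ^+ 2 = 2 + dd j.
Proof. by rewrite /= sqrtCK. Qed.

Section Omega.
Variable s : nat.

Definition dS := dd s.
Definition DD := sqrtC (dS ^+ 2 - 4).
Definition om : algC := (dS + DD) / 2.

Lemma om_eq : om ^+ 2 + 1 = dS * om.
Proof.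
apply/eqP; rewrite -subr_eq0; apply/eqP.
have hD : DD ^+ 2 = dS ^+ 2 - 4 by rewrite sqrtCK.
have -> : om ^+ 2 + 1 - dS * om = (DD ^+ 2 - (dS ^+ 2 - 4)) / 4.
  by rewrite /om; field.
by rewrite hD subrr mul0r.
Qed.

Lemma om_neq0 : om != 0.
Proof.
apply/eqP => h; have := om_eq; rewrite h expr0n /= add0r mulr0.
by move/eqP; rewrite oner_eq0.
Qed.

Definition pp k := om ^+ (2 ^ k) + om^-1 ^+ (2 ^ k).

Lemma pp_eq k : (k <= s)%N -> pp k = dd (s - k).
Proof.
elim: k => [|k IH] hk.
  rewrite /pp subn0 !expr1 -/dS.
  apply: (mulfI om_neq0); rewrite mulrDr mulfV ?om_neq0 // -expr2 om_eq mulrC.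
  done.
have hk' : (k <= s)%N by apply: ltnW.
have e : (s - k = (s - k.+1).+1)%N by lia.
rewrite /pp expnSr !exprM.
have := IH hk'; rewrite /pp e => h.
have hm : om ^+ (2 ^ k) * om^-1 ^+ (2 ^ k) = 1 by rewrite -exprMn mulfV ?om_neq0 // expr1n.
have h2 := dd_sq (s - k.+1); rewrite -h in h2.
have -> : dd (s - k.+1) = (om ^+ (2 ^ k) + om^-1 ^+ (2 ^ k)) ^+ 2 - 2 by rewrite h2; ring.
rewrite sqrrD hm; ring.
Qed.

Lemma fact1 k : 1 + om ^+ (2 ^ k.+1) = om ^+ (2 ^ k) * pp k.
Proof.
have hm : om ^+ (2 ^ k) * om^-1 ^+ (2 ^ k) = 1 by rewrite -exprMn mulfV ?om_neq0 // expr1n.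
by rewrite /pp mulrDr hm -exprD addnn -mul2n -expnS addrC.
Qed.

Definition zeta := om ^+ 2.

Lemma zetaX k : zeta ^+ (2 ^ k) = om ^+ (2 ^ k.+1).
Proof. by rewrite /zeta -exprM -expnS. Qed.

Lemma zeta_s : zeta ^+ (2 ^ s) = -1.
Proof.
apply/eqP; rewrite -subr_eq0 opprK addrC zetaX fact1 pp_eq // subnn /=.
by rewrite mulr0.
Qed.

Lemma zeta_gt k : (s < k)%N -> zeta ^+ (2 ^ k) = 1.
Proof.
move=> sk; have e : (2 ^ k = 2 ^ s * (2 * 2 ^ (k - s.+1)))%N.
  by rewrite -expnS -expnD; congr (_ ^ _)%N; lia.
by rewrite e exprM zeta_s exprM sqrrN expr1n expr1n.
Qed.

Lemma zeta_le k : (k <= s)%N -> 1 + zeta ^+ (2 ^ k) = om ^+ (2 ^ k) * dd (s - k).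
Proof. by move=> ks; rewrite zetaX fact1 pp_eq. Qed.

End Omega.

Local Open Scope ring_scope.

Definition ev (z : algC) (p : {poly int}) : algC := (map_poly (intr : int -> algC) p).[z].

Lemma ev_prod_hB n (t : n.-tuple 'I_n.+1) z :
  ev z (hB t) = \prod_(k < n.+1) (1 + z ^+ (2 ^ k)) ^+ ex t k.
Proof.
rewrite /ev /hB rmorph_prod horner_prod; apply: eq_bigr => k _.
by rewrite rmorphXn rmorphD rmorph1 /= map_polyXn horner_exp hornerD hornerC hornerXn.
Qed.

Lemma ev_sumB n z : ev z (sumB n) = \sum_(t : n.-tuple 'I_n.+1 | is_bin_part t) ev z (hB t).
Proof. by rewrite /ev /sumB rmorph_sum horner_sum. Qed.

Lemma ev_fullB n z :
  ev z (fullB n) = \prod_(k < n.+1) (1 + z ^+ (2 ^ k)) ^+ (n %/ 2 ^ k)%N.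
Proof.
rewrite /ev /fullB rmorph_prod horner_prod; apply: eq_bigr => k _.
by rewrite rmorphXn rmorphD rmorph1 /= map_polyXn horner_exp hornerD hornerC hornerXn.
Qed.

Section Main.
Variables (n s : nat).
Hypothesis hsn : (2 ^ s <= n)%N.

Lemma hs : (s < n.+1)%N.
Proof. by rewrite ltnS; apply: leq_trans _ hsn; exact: ltnW (ltn_expl s (isT : (1 < 2)%N)). Qed.

Definition so : 'I_n.+1 := Ordinal hs.

Definition RR (t : n.-tuple 'I_n.+1) (k : 'I_n.+1) : algC :=
  if (k <= s)%N then dd (s - k) ^+ ex t k else 2 ^+ ex t k.

Definition AA := (\sum_(k < n.+1 | (k <= s)%N) 2 ^ k * (n %/ 2 ^ k) - n)%N.

Lemma RR_ge0 t k : 0 <= RR t k.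
Proof. by rewrite /RR; case: ifP => _; rewrite exprn_ge0 ?dd_ge0. Qed.

Lemma ev_hB2 t : is_bin_part t ->
  ev (zeta s) (hB t) = om s ^+ AA * \prod_(k < n.+1) RR t k.
Proof.
move=> bt; rewrite ev_prod_hB.
have hf (k : 'I_n.+1) : (1 + zeta s ^+ (2 ^ k)) ^+ ex t k =
   om s ^+ (if (k <= s)%N then 2 ^ k * ex t k else 0)%N * RR t k.
  rewrite /RR; case: ifP => ks.
    by rewrite zeta_le // exprMn exprM.
  rewrite zeta_gt ?expr0 ?mul1r //; last by rewrite ltnNge ks.
rewrite (eq_bigr _ (fun k _ => hf k)) big_split /= prodrXr.
case: (posnP (ex t so)) => e0.
  congr (_ ^+ _ * _); rewrite -big_mkcond /=.
  by have := count_exp bt e0; rewrite /AA /so /= => <-; rewrite addnK.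
have hz : (ex t so == 0%N) = false by apply/negbTE; rewrite -lt0n.
have P0 : \prod_(k < n.+1) RR t k = 0.
  rewrite (bigD1 so) //= /RR /so /= leqnn subnn expr0n.
  by move: hz; rewrite /so /= => ->; rewrite mul0r.
by rewrite P0 !mulr0.
Qed.

Lemma ev_sumB_neq0 : ev (zeta s) (sumB n) != 0.
Proof.
rewrite ev_sumB.
rewrite (eq_bigr _ (fun t bt => ev_hB2 bt)) -mulr_sumr mulf_neq0 ?expf_neq0 ?om_neq0 //.
rewrite Order.POrderTheory.gt_eqF // (bigD1 (t0 hsn)) ?bin_t0 //=.
apply: ltr_pwDl; last by apply: sumr_ge0 => t _; apply: prodr_ge0 => k _; apply: RR_ge0.
apply: prodr_gt0 => k _; rewrite /RR; case: ifP => ks.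
  case: (ltngtP k s) => ks'.
  - by rewrite exprn_gt0 // -(subnSK ks') dd_gt0.
  - by move: ks; rewrite leqNgt ks'.
  have -> : ex (t0 hsn) k = 0%N by rewrite ks' ex_t0.
  by rewrite expr0 ltr01.
by rewrite exprn_gt0 // ltr0n.
Qed.

End Main.

Local Open Scope ring_scope.

Lemma prim2 s (z : algC) : z ^+ (2 ^ s) = -1 -> (2 ^ s.+1)%N.-primitive_root z.
Proof.
move=> hz.
have h1 : z ^+ (2 ^ s.+1) = 1 by rewrite expnS mulnC exprM hz sqrrN expr1n.
have [m pm] := prim_order_exists (expn_gt0 2 s.+1) h1.
case/(dvdn_pfactor _ _ (isT : prime 2)) => j hj mj.
case: (ltngtP j s.+1) => hjs.
- exfalso.
  have e : (2 ^ s = 2 ^ j * 2 ^ (s - j))%N by rewrite -expnD; congr (_ ^ _)%N; lia.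
  move: hz; rewrite e exprM -mj (UnityRootTheory.prim_expr_order pm) expr1n => /eqP.
  rewrite -subr_eq0 opprK -[1 + 1]/(2%:R) pnatr_eq0 //.
- by move: hj; rewrite leqNgt hjs.
- by rewrite -hjs -mj.
Qed.

Lemma ev_ZQ (z : algC) (q : {poly int}) :
  map_poly (intr : int -> algC) q = map_poly ratr (map_poly (intr : int -> rat) q).
Proof.
rewrite -map_poly_comp; apply: eq_map_poly => x /=.
by rewrite rmorph_int.
Qed.

Lemma transfer s (z w : algC) (q : {poly int}) :
  z ^+ (2 ^ s) = -1 -> w ^+ (2 ^ s) = -1 -> ev z q = 0 -> ev w q = 0.
Proof.
move=> hz hw.
have ez := minCpoly_cyclotomic (prim2 hz).
have ew := minCpoly_cyclotomic (prim2 hw).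
rewrite -(Cintr_Cyclotomic (prim2 hz)) in ez.
rewrite -(Cintr_Cyclotomic (prim2 hw)) in ew.
have [pz [Dz _] rz] := minCpolyP z.
have [pw [Dw _] rw] := minCpolyP w.
have epw : pz = pw by apply: (map_poly_inj ratr); exact: (etrans (esym Dz) (etrans (etrans ez (esym ew)) Dw)).
rewrite /ev (ev_ZQ z q) => /eqP h.
have : root (map_poly ratr (map_poly (intr : int -> rat) q)) z by exact: h.
by rewrite rz epw -rw => /eqP.
Qed.

Lemma key n s (z : algC) : (2 ^ s <= n)%N -> z ^+ (2 ^ s) = -1 -> ev z (sumB n) != 0.
Proof.
move=> hsn hz; apply/eqP => h.
have := ev_sumB_neq0 hsn; rewrite (transfer hz (zeta_s s) h) eqxx //.
Qed.

Lemma evM z p q : ev z (p * q) = ev z p * ev z q.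
Proof. by rewrite /ev rmorphM hornerM. Qed.

Lemma ev_1X z m : ev z (1 + 'X^m) = 1 + z ^+ m.
Proof. by rewrite /ev rmorphD rmorph1 /= map_polyXn hornerD hornerC hornerXn. Qed.

Lemma fullB_monic n : fullB n \is monic.
Proof.
apply: monic_prod => k _; apply: monic_exp.
by rewrite addrC -polyC1 monicXnaddC // expn_gt0.
Qed.

Unset Implicit Arguments.
Local Open Scope ring_scope.

(* num_B(n,x) = N and den_B(n,x) = D are characterized by
   sumB n = G_B(n,x) * N and fullB n = G_B(n,x) * D. *)
Theorem theorem2 :
  (forall (n s : nat), (2 <= n)%N -> (2 ^ s <= n)%N ->
     forall G N : {poly int}, is_GB n G -> sumB n = G * N ->
       ~ dvdZ (1 + 'X^(2 ^ s)) N)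
  /\
  (forall n : nat, (1 <= n)%N ->
     forall G N D : {poly int}, is_GB n G -> sumB n = G * N -> fullB n = G * D ->
       forall d : {poly int}, dvdZ d N -> dvdZ d D -> d \is a GRing.unit).
Proof.
split.
  move=> n s _ hsn G N _ hS [r hr].
  have := ev_sumB_neq0 hsn.
  by rewrite hS hr !evM ev_1X zeta_s subrr !mulr0 eqxx.
move=> n n1 G N D _ hS hF d [r1 h1] [r2 h2].
have hF' : fullB n = (G * r2) * d by rewrite hF h2 mulrA.
have hS' : sumB n = (G * r1) * d by rewrite hS h1 mulrA.
have dn0 : d != 0.
  apply/eqP => d0; have := monic_neq0 (fullB_monic n).
  by rewrite hF' d0 mulr0 eqxx.
case: (boolP (size d == 1%N)) => sd.
  rewrite poly_unitE sd /=; apply/unitrPr; exists (lead_coef (G * r2)).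
  have := congr1 lead_coef hF'; rewrite (monicP (fullB_monic n)) lead_coefM.
  by rewrite [lead_coef d]lead_coefE (eqP sd) /= mulrC => <-.
have sd' : size (map_poly (intr : int -> algC) d) != 1%N.
  by rewrite size_map_inj_poly //; exact: intr_inj.
case/closed_rootP: sd' => z /eqP rz.
have evd : ev z d = 0 by exact: rz.
have := congr1 (ev z) hF'; rewrite evM evd mulr0 ev_fullB => /eqP.
case/prodf_eq0 => k _; rewrite expf_eq0 => /andP [hk /eqP hz].
rewrite divn_gt0 ?expn_gt0 // in hk.
have hz' : z ^+ (2 ^ k) = -1 by apply/eqP; rewrite -addr_eq0 addrC hz.
have := key hk hz'; rewrite hS' evM evd mulr0 eqxx //.
Qed.
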